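(* Let $q$ be a power of an odd prime $p$, $s\ge2$, and $n\ge s$ integers with $d_{\max\text{-}iso}(q;[n,s])\ge1$; let $\pi:\mathbb{F}_{q^s}\to\mathbb{F}_q^n$ be an isometry whose image $\pi(\mathbb{F}_{q^s})$ is an $[n,s,d]_q$ code with $d=d_{\max\text{-}iso}(q;[n,s])$. Let $a,b\in\mathbb{F}_{q^s}$ with $b\neq0$ and let $N\ge2$. Let $r\ge0$ be such that $p^r$ divides $N+1$ but $p^{r+1}$ does not, let $N+1=p^r(m+1)$, let $\theta\in\overline{\mathbb{F}}_q$ be a primitive $2(m+1)$-th root of unity, and let $\mu^2=-1$. Let $S_1=\{-\mu/b+\theta^i+\theta^{-i}:1\le i\le m\}\cup\{\mu/b+\theta^i+\theta^{-i}:1\le i\le m\}$ and $S_2=\{-\mu/b+2,-\mu/b-2,\mu/b+2,\mu/b-2\}$. Assume: if $r=0$, then $a/b\notin S_1$; if $r\ge1$ and $m=0$, then $a/b\notin S_2$; if $r\ge1$ and $m\ge1$, then $a/b\notin S_1\cup S_2$. Then $\pi^{\otimes 2N}(\hat C_N(a,b))$ is an LCD code over $\mathbb{F}_q$ with parameters $[2nN,sN,D^*]_q$, where $D^*\ge dD$ and $D$ is the minimum distance of $\hat C_N(a,b)$.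
   Context: For a field $K$, $a,b\in K$ and $N\ge 2$, $\hat T_N(a,b)$ is the $N\times N$ symmetric tridiagonal Toeplitz matrix with diagonal entries $a$, first super- and sub-diagonal entries $b$, other entries $0$; $\hat C_N(a,b)$ is the $[2N,N]$ linear code over $K$ (here $K=\mathbb{F}_{q^s}$) with generator matrix $[I_N\mid\hat T_N(a,b)]$. A linear code $C$ is LCD if $C\cap C^\perp=\{0\}$ (Euclidean dual). An $\mathbb{F}_q$-linear map $\pi:\mathbb{F}_{q^s}\to\mathbb{F}_q^n$ ($n\ge s\ge2$) is an isometry if there is an $\mathbb{F}_q$-basis $(e_1,\dots,e_s)$ of $\mathbb{F}_{q^s}$ with trace-dual basis $(e'_1,\dots,e'_s)$ such that $\pi(e_i)\cdot\pi(e'_j)=\delta_{ij}$ for all $i,j$ (standard inner product on $\mathbb{F}_q^n$). $d_{\max\text{-}iso}(q;[n,s])$ is the largest $d$ such that some isometry $\pi:\mathbb{F}_{q^s}\to\mathbb{F}_q^n$ has image $\pi(\mathbb{F}_{q^s})$ (an $[n,s]_q$ code) of minimum distance $d$. The map $\pi^{\otimes 2N}:\mathbb{F}_{q^s}^{2N}\to\mathbb{F}_q^{2Nn}$ is $(c_1,\dots,c_{2N})\mapsto(\pi(c_1),\dots,\pi(c_{2N}))$. *)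

(* Defs.v *)
From HB Require Import structures.
From mathcomp Require Import all_boot all_order all_algebra all_field.
Set Implicit Arguments. Unset Strict Implicit. Unset Printing Implicit Defensive.
Import Order.TTheory GRing.Theory Num.Theory.
Local Open Scope ring_scope.

Definition wt (R : nmodType) (k : nat) (v : 'rV[R]_k) : nat :=
  #|[pred i : 'I_k | v 0 i != 0]|.

Definition is_min_dist (R : zmodType) (k : nat) (C : 'rV[R]_k -> Prop) (d : nat) : Prop :=
  (exists c1 c2, [/\ C c1, C c2, c1 != c2 & wt (c1 - c2) = d]) /\
  (forall c1 c2, C c1 -> C c2 -> c1 != c2 -> (d <= wt (c1 - c2))%N).

Definition dotv (R : pzRingType) (k : nat) (u v : 'rV[R]_k) : R :=
  \sum_(i < k) u 0 i * v 0 i.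

Definition is_linear_code_dim (K : fieldType) (l : nat) (C : 'rV[K]_l -> Prop) (k : nat) : Prop :=
  exists M : 'M[K]_(k, l), row_free M /\ forall v, C v <-> (v <= M)%MS.

Definition is_LCD (R : pzRingType) (l : nat) (C : 'rV[R]_l -> Prop) : Prop :=
  forall v, C v -> (forall w, C w -> dotv v w = 0) -> v = 0.

(* Trace of L = F_{q^s} over F = F_q : x + x^q + ... + x^(q^(s-1)). *)
Definition trF (F : finFieldType) (L : fieldExtType F) (x : L) : L :=
  \sum_(i < \dim {:L}) x ^+ (#|F| ^ i).

Definition is_isometry (F : finFieldType) (L : fieldExtType F) (n : nat)
    (pi : {linear L -> 'rV[F]_n}) : Prop :=
  exists e e' : (\dim {:L}).-tuple L,
    [/\ basis_of fullv e,
        (forall i j, trF (tnth e i * tnth e' j) = (i == j)%:R) &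
        (forall i j, dotv (pi (tnth e i)) (pi (tnth e' j)) = (i == j)%:R)].
Arguments is_isometry {F L n} pi.

Definition image_code (F : finFieldType) (L : fieldExtType F) (n : nat)
    (pi : {linear L -> 'rV[F]_n}) : 'rV[F]_n -> Prop :=
  fun v => exists x, v = pi x.

Definition is_dmax_iso (F : finFieldType) (L : fieldExtType F) (n d : nat) : Prop :=
  (exists pi : {linear L -> 'rV[F]_n}, is_isometry pi /\ is_min_dist (image_code pi) d) /\
  (forall (pi : {linear L -> 'rV[F]_n}) d', is_isometry pi ->
      is_min_dist (image_code pi) d' -> (d' <= d)%N).
Arguments is_dmax_iso {F} L n d.

Definition tridiag (K : pzRingType) (N : nat) (a b : K) : 'M[K]_N :=
  \matrix_(i, j) (if i == j then a
                  else if ((i.+1 == j) || (j.+1 == i))%N then b else 0).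

Definition hatC (K : pzRingType) (N : nat) (a b : K) : 'rV[K]_(N + N) -> Prop :=
  fun c => exists u : 'rV[K]_N, c = u *m row_mx 1%:M (tridiag N a b).
Arguments hatC {K} N a b _.

Definition pi_tensor (F : finFieldType) (L : fieldExtType F) (n l : nat)
    (pi : {linear L -> 'rV[F]_n}) (c : 'rV[L]_l) : 'rV[F]_(l * n) :=
  mxvec (\matrix_(i < l) pi (c 0 i)).

Definition image_tensor_code (F : finFieldType) (L : fieldExtType F) (n N : nat)
    (pi : {linear L -> 'rV[F]_n}) (a b : L) : 'rV[F]_((N + N) * n) -> Prop :=
  fun v => exists c, hatC N a b c /\ v = pi_tensor pi c.
Arguments image_tensor_code {F L n} N pi a b _.

Definition notin_S1 (E : fieldType) (m : nat) (theta mu b x : E) : Prop :=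
  forall i : nat, (1 <= i <= m)%N ->
    x != - mu / b + theta ^+ i + theta ^- i /\ x != mu / b + theta ^+ i + theta ^- i.

Definition notin_S2 (E : fieldType) (mu b x : E) : Prop :=
  x \notin [:: - mu / b + 2; - mu / b - 2; mu / b + 2; mu / b - 2].

(* Main.v *)
Require Import Defs.
From HB Require Import structures.
From mathcomp Require Import all_boot all_order all_algebra all_field.
From mathcomp Require Import ring.
From Stdlib Require Import Lia.
From mathcomp Require Import zify.
Set Implicit Arguments. Unset Strict Implicit. Unset Printing Implicit Defensive.
Import Order.TTheory GRing.Theory Num.Theory.
Local Open Scope ring_scope.
From Stdlib Require Import Classical.
Fixpoint cheb (K : pzRingType) (x : K) (k : nat) : K :=
  match k with 0 => 1 | 1 => x | (k'.+1 as k1).+1 => x * cheb x k1 - cheb x k' end.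

Lemma chebSS (K : pzRingType) (x : K) k : cheb x k.+2 = x * cheb x k.+1 - cheb x k.
Proof. by []. Qed.

Section Mx.
Variable (K : fieldType) (x : K).

Definition Am : 'M[K]_2 := \matrix_(i, j)
  (if (i : nat) == 0%N then (if (j : nat) == 0%N then x else -1)
   else (if (j : nat) == 0%N then 1 else 0)).
Definition Xm : 'M[K]_2 := x%:M.
Definition Bm : 'M[K]_2 := Xm - Am.

Lemma Am2 : Am * Am = Xm * Am - 1.
Proof.
apply/matrixP=> i j; rewrite !(mxE, big_ord_recl, big_ord0) /=.
case: i => [[|[|i]] Hi] //; case: j => [[|[|j]] Hj] //=; rewrite ?mulr1n ?mulr0n; ring.
Qed.
End Mx.

Local Notation comm := GRing.comm.
Section Mx2.
Variable (K : fieldType) (x : K).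
Local Notation A := (Am x).
Local Notation B := (Bm x).
Local Notation X := (Xm x).

Lemma scC (c : K) (M : 'M[K]_2) : comm (c%:M) M.
Proof. by rewrite /comm -!mulmxE scalar_mxC. Qed.

Lemma AB1 : A * B = 1.
Proof. by rewrite /Bm mulrBr Am2 -(scC x A) /Xm opprB addrCA subrr addr0. Qed.
Lemma BA1 : B * A = 1.
Proof. by rewrite /Bm mulrBl Am2 /Xm opprB addrCA subrr addr0. Qed.
Lemma cAB : comm A B.
Proof. by rewrite /comm AB1 BA1. Qed.
Lemma XAB : X = A + B.
Proof. by rewrite /Bm addrC subrK. Qed.

Lemma cheb_mx k : (A - B) * (cheb x k)%:M = A ^+ k.+1 - B ^+ k.+1.
Proof.
suff: (A - B) * (cheb x k)%:M = A ^+ k.+1 - B ^+ k.+1 /\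
      (A - B) * (cheb x k.+1)%:M = A ^+ k.+2 - B ^+ k.+2 by case.
elim: k => [|k [IH1 IH2]].
  split; first by rewrite /= mulr1 !expr1.
  rewrite /= -/(Xm x) XAB mulrBl [A * _]mulrDr [B * (A + B)]mulrDr -!expr2 cAB.
  by rewrite opprD addrA addrK.
split=> //.
rewrite chebSS rmorphB rmorphM /= mulrBr mulrA -(scC x (A - B)) -mulrA IH2.
rewrite IH1 -/(Xm x) XAB [A ^+ k.+3]exprS [A ^+ k.+2]exprS [B ^+ k.+3]exprS [B ^+ k.+2]exprS.
rewrite mulrDl [A * (_ - _)]mulrBr [B * (_ - _)]mulrBr.
rewrite [A * (B * _)]mulrA AB1 mul1r [B * (A * _)]mulrA BA1 mul1r.
by rewrite opprB addrACA subrK addrAC subrr add0r.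
Qed.
End Mx2.

Lemma two_neq0 (K : fieldType) (p : nat) : p \in [pchar K] -> odd p -> (2%:R : K) != 0.
Proof.
move=> pc op; rewrite -(dvdn_pcharf pc); apply/negP=> d.
have pp := pcharf_prime pc; have := prime_gt1 pp; have := dvdn_leq (isT : (0 < 2)%N) d.
by case: p {pc pp d} op => [|[|[|]]].
Qed.

Section Mx3.
Variable (K : fieldType) (x : K).
Local Notation A := (Am x).
Local Notation B := (Bm x).
Local Notation X := (Xm x).
Local Notation D := (Am x - Bm x).

Lemma cheb_mx2 k : A ^+ k.+1 * (D * (cheb x k)%:M) = A ^+ (k.+1 + k.+1) - 1.
Proof.
by rewrite cheb_mx mulrBr -exprD -(exprMn_comm _ (@cAB K x)) AB1 expr1n.
Qed.

Lemma D2 : D ^+ 2 = (x ^+ 2 - 4)%:M.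
Proof.
apply/matrixP=> i j; rewrite !(mxE, big_ord_recl, big_ord0) /=.
case: i => [[|[|i]] Hi] //; case: j => [[|[|j]] Hj] //=; rewrite ?mulr1n ?mulr0n; ring.
Qed.

Lemma D10 : D (Ordinal (isT : (1 < 2)%N)) (Ordinal (isT : (0 < 2)%N)) = 2%:R.
Proof. by rewrite !mxE /= mulr0n; ring. Qed.

Lemma frob_mx (p : nat) (Z : 'M[K]_2) r : p \in [pchar K] -> (Z - 1) ^+ (p ^ r) = Z ^+ (p ^ r) - 1.
Proof.
move=> pc; have pc2 : p \in [pchar 'M[K]_2] := rmorph_pchar (@scalar_mx K 2) pc.
elim: r => [|r IH]; first by rewrite !expr1.
rewrite expnSr !exprM IH -!(pFrobenius_autE pc2) pFrobenius_autB_comm ?pFrobenius_aut1 //.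
exact: commr1.
Qed.
End Mx3.

Lemma mxsc (K : fieldType) (M : 'M[K]_2) c i j : (M * c%:M) i j = M i j * c.
Proof. by rewrite -mulmxE mul_mx_scalar mxE mulrC. Qed.

Lemma cheb_pow (K : fieldType) (p r m N : nat) (x : K) :
  p \in [pchar K] -> odd p -> N.+1 = (p ^ r * m.+1)%N ->
  cheb x N = (x ^+ 2 - 4) ^+ (p ^ r)./2 * cheb x m ^+ (p ^ r).
Proof.
move=> pc op HN.
set q := (p ^ r)%N.
have oq : odd q by rewrite /q oddX op orbT.
set A := Am x; set B := Bm x; set D := A - B.
have cAD : forall k, GRing.comm (A ^+ k) (D * (cheb x m)%:M).
  move=> k; rewrite /D cheb_mx; apply: commr_sym; apply: commrX; apply: commr_sym.
  apply: commrB; first exact: commrX.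
  by apply: commrX; apply: cAB.
have H1 : A ^+ N.+1 * (D * (cheb x N)%:M) =
          A ^+ N.+1 * (D ^+ q * (cheb x m ^+ q)%:M).
  have E : (N.+1 + N.+1 = (m.+1 + m.+1) * q)%N by rewrite HN -mulnDr mulnC.
  rewrite cheb_mx2 E exprM -frob_mx //.
  rewrite -cheb_mx2 exprMn_comm; last exact: cAD.
  rewrite -exprM mulnC -HN; congr (_ * _).
  by rewrite exprMn_comm ?rmorphXn //; apply: commr_sym; apply: scC.
have H2 : D * (cheb x N)%:M = D ^+ q * (cheb x m ^+ q)%:M.
  have BA : B ^+ N.+1 * A ^+ N.+1 = 1.
    by rewrite -(exprMn_comm _ (commr_sym (@cAB K x))) BA1 expr1n.
  by rewrite -[LHS]mul1r -BA -mulrA H1 mulrA BA mul1r.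
have H3 : D ^+ q = D * ((x ^+ 2 - 4) ^+ q./2)%:M.
  rewrite -{1}(odd_double_half q) oq add1n exprS -muln2 mulnC exprM.
  by rewrite D2 rmorphXn.
move: H2; rewrite H3 -mulrA -rmorphM /= => H2.
have := congr1 (fun M : 'M[K]_2 => M (Ordinal (isT : (1 < 2)%N)) (Ordinal (isT : (0 < 2)%N))) H2.
rewrite /= !mxsc D10 => /(mulfI (two_neq0 pc op)).
by rewrite mulrC.
Qed.
Lemma det22 (K : fieldType) (M : 'M[K]_2) :
  \det M = M 0 0 * M 1 1 - M 0 1 * M 1 0.
Proof.
rewrite (expand_det_row _ 0) !big_ord_recl big_ord0 /cofactor !det_mx11 !mxE /=.
rewrite addr0 expr0 expr1 !mul1r mulN1r mulrN.
congr (_ * _ - _ * _); congr (M _ _); apply/val_inj => //.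
Qed.

Lemma detAl (K : fieldType) (x l : K) : \det (Am x - l%:M) = l ^+ 2 - x * l + 1.
Proof. rewrite det22 !mxE /= ?mulr1n ?mulr0n; ring. Qed.

Lemma cheb_root_m (K : fieldType) (x th : K) m :
  (2 * m.+1)%N.-primitive_root th -> cheb x m = 0 ->
  exists2 j, (j < 2 * m.+1)%N & x = th ^+ j + th ^- j.
Proof.
move=> prim H0.
have HA : Am x ^+ (2 * m.+1) = 1.
  have := cheb_mx2 x m; rewrite H0 rmorph0 !mulr0 => /eqP; rewrite eq_sym subr_eq0 addnn -mul2n.
  by move/eqP.
have := factor_Xn_sub_1 prim; move/(congr1 (horner_mx (Am x))).
rewrite rmorph_prod rmorphB /= rmorph1 rmorphXn /= horner_mx_X HA subrr.
move/(congr1 determinant); rewrite det0 (big_morph _ (@det_mulmx K 2) (@det1 K 2)) => /eqP.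
rewrite prodf_seq_eq0 => /hasP [j]; rewrite mem_index_iota => /andP [_ Hj] /=.
rewrite rmorphB /= horner_mx_X horner_mx_C detAl => /eqP Hl.
exists j => //.
have nz : th ^+ j != 0.
  rewrite expf_eq0 negb_and; apply/orP; right.
  apply/negP => /eqP th0; move: (prim_expr_order prim); rewrite th0 expr0n /= => /eqP.
  by rewrite eq_sym oner_eq0.
apply: (mulIf nz); rewrite mulrDl mulVf // -[RHS]subr0 -Hl; ring.
Qed.

Lemma cheb2 (K : fieldType) k : cheb (2%:R : K) k = (k.+1)%:R.
Proof.
suff: cheb (2%:R : K) k = (k.+1)%:R /\ cheb (2%:R : K) k.+1 = (k.+2)%:R by case.
elim: k => [|k [IH1 IH2]]; first by split=> //=; rewrite mulr1n.
split=> //; rewrite chebSS IH1 IH2 -[k.+3]addn3 -[k.+2]addn2 -[k.+1]addn1 !natrD; ring.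
Qed.

Lemma chebm2 (K : fieldType) k : cheb (- 2%:R : K) k = (-1) ^+ k * (k.+1)%:R.
Proof.
suff: cheb (- 2%:R : K) k = (-1) ^+ k * (k.+1)%:R /\
      cheb (- 2%:R : K) k.+1 = (-1) ^+ k.+1 * (k.+2)%:R by case.
elim: k => [|k [IH1 IH2]]; first by split=> //=; rewrite ?mul1r ?mulr1n ?expr1 ?mulN1r.
split=> //; rewrite chebSS IH1 IH2 !exprS -[k.+3]addn3 -[k.+2]addn2 -[k.+1]addn1 !natrD; ring.
Qed.

Lemma cheb_roots (K : fieldType) (p r m N : nat) (x th : K) :
  p \in [pchar K] -> odd p -> N.+1 = (p ^ r * m.+1)%N -> ~~ (p %| m.+1)%N ->
  (2 * m.+1)%N.-primitive_root th -> cheb x N = 0 ->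
  ((1 <= r)%N /\ (x = 2%:R \/ x = - 2%:R)) \/
  (exists i, (1 <= i <= m)%N /\ x = th ^+ i + th ^- i).
Proof.
move=> pc op HN ndv prim H0.
have m1nz : (m.+1%:R : K) != 0 by rewrite -(dvdn_pcharf pc).
move: H0; rewrite (cheb_pow x pc op HN) => /eqP; rewrite mulf_eq0 => /orP [].
  rewrite expf_eq0 => /andP [hpos /eqP H4]; left; split.
    case: r HN hpos => [|r] //; by rewrite expn0.
  have : (x - 2%:R) * (x + 2%:R) = 0 by rewrite -H4; ring.
  move/eqP; rewrite mulf_eq0 => /orP [/eqP H|/eqP H].
    by left; apply/eqP; rewrite -subr_eq0 H.
  by right; apply/eqP; rewrite -subr_eq0 opprK H.
rewrite expf_eq0 => /andP [_ /eqP Hm]; right.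
have [j Hj Hx] := cheb_root_m prim Hm.
have thm1 : th ^+ m.+1 = -1.
  have : (th ^+ m.+1) ^+ 2 == 1 by rewrite -exprM mulnC (prim_expr_order prim).
  rewrite sqrf_eq1 => /orP [H1|/eqP //].
  have : (2 * m.+1 %| m.+1)%N by rewrite (prim_order_dvd prim).
  by move/dvdn_leq => /(_ isT); rewrite leqNgt -[X in (X < _)%N]mul1n ltn_pmul2r.
have thnz : th != 0.
  apply/negP => /eqP th0; move: (prim_expr_order prim); rewrite th0 expr0n /= => /eqP.
  by rewrite eq_sym oner_eq0.
case: (posnP j) => [j0|jpos].
  exfalso; move: Hm; rewrite Hx j0 expr0 invr1 [1 + 1](_ : _ = 2%:R) // cheb2; exact/eqP.
case: (ltngtP j m.+1) => [jlt|jgt|jeq].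
- by exists j; rewrite jpos -ltnS jlt.
- exists (2 * m.+1 - j)%N; split; first by apply/andP; split; lia.
  have E : th ^+ (2 * m.+1 - j) * th ^+ j = 1.
    by rewrite -exprD subnK ?(prim_expr_order prim) //; exact: ltnW.
  have E2 : th ^+ (2 * m.+1 - j) = th ^- j.
    apply: (mulIf (expf_neq0 j thnz)); rewrite E mulVf //; exact: expf_neq0.
  by rewrite Hx E2 invrK addrC.
- exfalso; move: Hm; rewrite Hx jeq thm1 invrN invr1 -opprD [1 + 1](_ : _ = 2%:R) // chebm2.
  apply/eqP; rewrite mulf_eq0 negb_or m1nz andbT expf_eq0 negb_and.
  by rewrite oppr_eq0 oner_eq0 orbT.
Qed.

Section Ker.
Variables (K : fieldType) (N : nat) (al be : K) (u : 'rV[K]_N).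

Let uf k := \sum_(i < N) u 0 i * ((i : nat) == k)%:R.
Let up k := \sum_(i < N) u 0 i * ((i : nat).+1 == k)%:R.

Let ufE k (hk : (k < N)%N) : uf k = u 0 (Ordinal hk).
Proof.
rewrite /uf (bigD1 (Ordinal hk)) //= eqxx mulr1 big1 ?addr0 // => i /negbTE ne.
suff -> : ((i : nat) == k) = false by rewrite mulr0.
by apply/negbTE; apply: contraFN ne => /eqP e; apply/eqP/val_inj.
Qed.

Let uf_out k : (N <= k)%N -> uf k = 0.
Proof.
move=> hk; rewrite /uf big1 // => i _.
suff -> : ((i : nat) == k) = false by rewrite mulr0.
by apply/negbTE; rewrite neq_ltn (leq_trans (ltn_ord i) hk).
Qed.

Let up0 : up 0 = 0.
Proof. by rewrite /up big1 // => i _; rewrite mulr0. Qed.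

Let upS k : up k.+1 = uf k.
Proof. by []. Qed.

Let entry j : (u *m tridiag N al be) 0 j = al * uf j + be * up j + be * uf j.+1.
Proof.
rewrite mxE /uf /up !mulr_sumr -!big_split /=; apply: eq_bigr => i _.
rewrite mxE -val_eqE /= [(i : nat) == j.+1]eq_sym.
case: eqP => [e1|n1]; case: eqP => [e2|n2]; case: eqP => [e3|n3] /=; try lia;
  rewrite ?mulr1 ?mulr0 ?addr0 ?add0r ?mulr1n ?mulr0n; ring.
Qed.

Lemma tridiag_ker : be != 0 -> u *m tridiag N al be = 0 -> cheb (al / be) N != 0 -> u = 0.
Proof.
move=> bnz H cnz.
have Eq j : (j < N)%N -> al * uf j + be * up j + be * uf j.+1 = 0.
  by move=> hj; rewrite -[j]/(nat_of_ord (Ordinal hj)) -entry H mxE.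
case: (posnP N) => [N0|Npos].
  by apply/rowP => i; have := ltn_ord i; rewrite {2}N0.
set x := al / be.
pose vf k := (-1) ^+ k * uf k.
have vf0 : vf 0%N = uf 0%N by rewrite /vf expr0 mul1r.
have claim k : (k.+1 <= N)%N -> vf k = vf 0%N * cheb x k /\ vf k.+1 = vf 0%N * cheb x k.+1.
  elim: k => [|k IH] hk.
    split; first by rewrite /= mulr1.
    have := Eq 0%N Npos; rewrite up0 mulr0 addr0 => E0.
    rewrite vf0 /vf /= expr1 /x.
    have E0' : be * uf 1%N = - (al * uf 0%N) by rewrite -[RHS]add0r -E0; ring.
    have -> : uf 1%N = - (al * uf 0%N) / be by apply: (mulfI bnz); rewrite E0'; field.
    by field.
  have [IH1 IH2] := IH (ltnW hk).
  split; first exact: IH2.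
  have := Eq k.+1 hk; rewrite upS => E1.
  have -> : vf k.+2 = (-1) ^+ k * (- (al * uf k.+1 + be * uf k) / be).
    rewrite /vf !exprS !mulN1r opprK; congr (_ * _).
    have E1' : be * uf k.+2 = - (al * uf k.+1 + be * uf k) by rewrite -[RHS]add0r -E1; ring.
    by apply: (mulfI bnz); rewrite E1'; field.
  by rewrite chebSS mulrBr [vf 0%N * (_ * _)]mulrCA -IH2 -IH1 /vf /x exprS; field.
have hN : (N.-1.+1 <= N)%N by rewrite prednK.
have [_ HN] := claim N.-1 hN.
move: HN; rewrite prednK // /vf uf_out // mulr0 => /esym /eqP; rewrite mulf_eq0 (negbTE cnz) orbF.
move/eqP => v0.
apply/rowP => i; rewrite mxE.
have e : Ordinal (ltn_ord i) = i by apply: val_inj.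
rewrite -e -(ufE (ltn_ord i)).
have [Hk _] := claim i (ltn_ord i).
move: Hk; rewrite /vf v0 mul0r => /eqP; rewrite mulf_eq0 expf_eq0 oppr_eq0 oner_eq0 andbF /=.
by move/eqP.
Qed.
End Ker.

Lemma dotvE (R : comPzRingType) k (x y : 'rV[R]_k) : dotv x y = (x *m y^T) 0 0.
Proof. by rewrite /dotv mxE; apply: eq_bigr => i _; rewrite mxE. Qed.

Lemma tridiag_tr (R : pzRingType) N (a b : R) : (tridiag N a b)^T = tridiag N a b.
Proof.
apply/matrixP => i j; rewrite !mxE eq_sym; congr (if _ then _ else _).
by rewrite orbC.
Qed.

Lemma tridiag_map (R S : pzRingType) (f : {rmorphism R -> S}) N (a b : R) :
  map_mx f (tridiag N a b) = tridiag N (f a) (f b).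
Proof.
apply/matrixP => i j; rewrite !mxE.
by case: (i == j) => //; case: (_ || _) => //; rewrite rmorph0.
Qed.

Lemma tridiag_addsc (R : pzRingType) N (a b c : R) :
  tridiag N a b + c%:M = tridiag N (a + c) b.
Proof.
apply/matrixP => i j; rewrite !mxE.
by case: (i == j) => //=; rewrite ?mulr1n ?mulr0n ?addr0.
Qed.

Lemma GGt (R : comPzRingType) N (T : 'M[R]_N) : T^T = T ->
  row_mx 1%:M T *m (row_mx 1%:M T)^T = 1%:M + T *m T.
Proof. by move=> sT; rewrite tr_row_mx mul_row_col trmx1 mul1mx sT. Qed.

Lemma fact_sq (R : comPzRingType) N (T : 'M[R]_N) (mu : R) : mu ^+ 2 = -1 ->
  1%:M + T *m T = (T + mu%:M) *m (T - mu%:M).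
Proof.
move=> hmu; rewrite mulmxDl !mulmxBr mul_mx_scalar mul_scalar_mx -scalar_mxM -expr2 hmu.
by rewrite addrC addrA subrK rmorphN opprK.
Qed.

Lemma hatC_orth (L E : fieldType) (iota : {rmorphism L -> E}) N (a b : L) (mu : E)
  (u : 'rV[L]_N) :
  b != 0 -> mu ^+ 2 = -1 ->
  cheb ((iota a + mu) / iota b) N != 0 -> cheb ((iota a - mu) / iota b) N != 0 ->
  (forall u' : 'rV[L]_N, dotv (u *m row_mx 1%:M (tridiag N a b))
                              (u' *m row_mx 1%:M (tridiag N a b)) = 0) -> u = 0.
Proof.
move=> bnz hmu c1 c2 Horth.
set T := tridiag N a b.
have HM : u *m (1%:M + T *m T) = 0.
  apply/rowP => k.
  have := Horth (delta_mx 0 k); rewrite dotvE trmx_mul mulmxA -(mulmxA u) GGt ?tridiag_tr //.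
  by rewrite trmx_delta -colE [col _ _ _ _]mxE => ->; rewrite mxE.
have ibnz : iota b != 0 by rewrite fmorph_eq0.
set TE := tridiag N (iota a) (iota b).
have HE : map_mx iota u *m ((TE + mu%:M) *m (TE - mu%:M)) = 0.
  rewrite -fact_sq //.
  have := congr1 (map_mx iota) HM.
  by rewrite map_mx0 map_mxM map_mxD map_mx1 map_mxM tridiag_map.
have e1 : TE + mu%:M = tridiag N (iota a + mu) (iota b) by rewrite tridiag_addsc.
have e2 : TE - mu%:M = tridiag N (iota a - mu) (iota b) by rewrite -rmorphN tridiag_addsc.
rewrite e1 e2 mulmxA in HE.
have := tridiag_ker ibnz HE c2 => /(tridiag_ker ibnz) /(_ c1) Hu.
apply/rowP => i; have := congr1 (fun v : 'rV[E]_N => v 0 i) Hu; rewrite /= !mxE => /eqP.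
by rewrite fmorph_eq0 => /eqP.
Qed.


Lemma dotv_sumZl (R : comPzRingType) k m (c : 'I_m -> R) (v : 'I_m -> 'rV[R]_k) w :
  dotv (\sum_i c i *: v i) w = \sum_i c i * dotv (v i) w.
Proof.
rewrite /dotv; under eq_bigr => j _ do rewrite summxE mulr_suml.
rewrite exchange_big; apply: eq_bigr => i _; rewrite mulr_sumr.
by apply: eq_bigr => j _; rewrite mxE mulrA.
Qed.

Lemma dotvC (R : comPzRingType) k (v w : 'rV[R]_k) : dotv v w = dotv w v.
Proof. by apply: eq_bigr => i _; rewrite mulrC. Qed.

Lemma dotv_sumZr (R : comPzRingType) k m (c : 'I_m -> R) (v : 'I_m -> 'rV[R]_k) w :
  dotv w (\sum_i c i *: v i) = \sum_i c i * dotv w (v i).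
Proof. rewrite dotvC dotv_sumZl; by apply: eq_bigr => i _; rewrite dotvC. Qed.

Lemma sum_delta (R : pzSemiRingType) m (f : 'I_m -> R) i :
  \sum_(j < m) f j * (i == j)%:R = f i.
Proof.
rewrite (bigD1 i) //= eqxx mulr1 big1 ?addr0 // => j /negbTE; rewrite eq_sym => ->.
by rewrite mulr0.
Qed.

Lemma frobD_pow (R : comNzRingType) p k (x y : R) : p \in [pchar R] ->
  (x + y) ^+ (p ^ k) = x ^+ (p ^ k) + y ^+ (p ^ k).
Proof.
move=> pc; elim: k => [|k IH]; first by rewrite !expr1.
rewrite expnSr !exprM IH -!(pFrobenius_autE pc) pFrobenius_autD_comm //.
exact: mulrC.
Qed.

Lemma algX (F : fieldType) (L : lalgType F) (c : F) k : (c%:A : L) ^+ k = (c ^+ k)%:A.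
Proof. exact: (esym (rmorphXn (in_alg L) k c)). Qed.

Section Trace.
Variables (F : finFieldType) (L : fieldExtType F).

Lemma card_pow : exists p k, p \in [pchar L] /\ #|F| = (p ^ k)%N.
Proof.
have [p pr pc] := finPcharP F.
exists p, (logn p #|F|); split; last by have := card_pprimeChar pc.
exact: (rmorph_pchar (in_alg L) pc).
Qed.

Lemma trF_D (x y : L) : trF (x + y) = trF x + trF y.
Proof.
have [p [k [pc cF]]] := card_pow.
rewrite /trF -big_split /=; apply: eq_bigr => i _.
by rewrite cF -expnM frobD_pow.
Qed.

Lemma trF0 : trF (0 : L) = 0.
Proof. by apply: (addrI (trF 0)); rewrite -trF_D !addr0. Qed.

Lemma trF_sum I (r : seq I) (P : pred I) (f : I -> L) :
  trF (\sum_(i <- r | P i) f i) = \sum_(i <- r | P i) trF (f i).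
Proof. exact: (big_morph _ trF_D trF0). Qed.

Lemma expf_card_pow (c : F) i : c ^+ (#|F| ^ i) = c.
Proof.
elim: i => [|i IH]; first by rewrite expr1.
by rewrite expnSr exprM IH expf_card.
Qed.

Lemma trF_Z (c : F) (x : L) : trF (c *: x) = c *: trF x.
Proof.
rewrite /trF scaler_sumr; apply: eq_bigr => i _.
by rewrite -mulr_algl exprMn algX expf_card_pow mulr_algl.
Qed.
End Trace.

Lemma sum_delta' (R : pzSemiRingType) m (f : 'I_m -> R) i :
  \sum_(j < m) f j * (j == i)%:R = f i.
Proof. by rewrite -(sum_delta f i); apply: eq_bigr => j _; rewrite eq_sym. Qed.

Lemma sum_deltaZ (F : fieldType) (L : lalgType F) m (f : 'I_m -> F) i :
  \sum_(j < m) f j *: ((i == j)%:R : L) = f i *: 1.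
Proof.
rewrite (bigD1 i) //= eqxx big1 ?addr0 // => j /negbTE; rewrite eq_sym => ->.
by rewrite scaler0.
Qed.

Lemma mul_sums (F : fieldType) (L : algType F) m (a b : 'I_m -> F) (u v : 'I_m -> L) :
  (\sum_i a i *: u i) * (\sum_j b j *: v j) = \sum_i \sum_j (a i * b j) *: (u i * v j).
Proof.
rewrite mulr_suml; apply: eq_bigr => i _; rewrite mulr_sumr; apply: eq_bigr => j _.
by rewrite -scalerAl -scalerAr scalerA.
Qed.

Section Iso.
Variables (F : finFieldType) (L : fieldExtType F) (n : nat) (pi : {linear L -> 'rV[F]_n}).
Variables (e e' : (\dim {:L}).-tuple L).
Hypotheses (be : basis_of fullv e)
  (Htr : forall i j, trF (tnth e i * tnth e' j) = (i == j)%:R)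
  (Hdot : forall i j, dotv (pi (tnth e i)) (pi (tnth e' j)) = (i == j)%:R).

Lemma exp_e x : x = \sum_i coord e i x *: tnth e i.
Proof.
by rewrite {1}(coord_basis be (memvf x)); apply: eq_bigr => i _; rewrite (tnth_nth 0).
Qed.

Lemma pi_sum m (c : 'I_m -> F) (w : 'I_m -> L) : pi (\sum_i c i *: w i) = \sum_i c i *: pi (w i).
Proof. by rewrite linear_sum; apply: eq_bigr => i _; rewrite linearZ. Qed.

Lemma pi_inj0 x : pi x = 0 -> x = 0.
Proof.
move=> H; rewrite (exp_e x); apply: big1 => i _.
have : dotv (pi x) (pi (tnth e' i)) = coord e i x.
  rewrite {1}(exp_e x) pi_sum dotv_sumZl.
  by under eq_bigr => j _ do rewrite Hdot; rewrite sum_delta'.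
rewrite H /dotv big1 => [<-|j _]; first by rewrite scale0r.
by rewrite mxE mul0r.
Qed.

Lemma free_e' : free e'.
Proof.
apply/freeP => k Hk i.
have : trF (tnth e i * \sum_j k j *: e'`_j) = 0 by rewrite Hk mulr0 trF0.
rewrite mulr_sumr trF_sum.
under eq_bigr => j _ do rewrite -scalerAr trF_Z -(tnth_nth 0) Htr.
rewrite sum_deltaZ => /eqP; rewrite scaler_eq0 oner_eq0 orbF.
by move/eqP.
Qed.

Lemma basis_e' : basis_of fullv e'.
Proof. by rewrite basisEfree free_e' subvf size_tuple leqnn. Qed.

Lemma exp_e' x : x = \sum_i coord e' i x *: tnth e' i.
Proof.
by rewrite {1}(coord_basis basis_e' (memvf x)); apply: eq_bigr => i _; rewrite (tnth_nth 0).
Qed.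

Lemma trB x y : trF (x * y) = (dotv (pi x) (pi y))%:A.
Proof.
rewrite (exp_e x) (exp_e' y) mul_sums trF_sum pi_sum dotv_sumZl scaler_suml.
apply: eq_bigr => i _; rewrite trF_sum pi_sum dotv_sumZr.
under eq_bigr => j _ do rewrite trF_Z Htr.
under [in RHS]eq_bigr => j _ do rewrite Hdot.
by rewrite sum_deltaZ sum_delta.
Qed.
End Iso.

Lemma sum_mxvec (R : Type) (idx : R) (op : Monoid.com_law idx) l m (G : 'I_(l * m) -> R) :
  \big[op/idx]_k G k = \big[op/idx]_(i < l) \big[op/idx]_(j < m) G (mxvec_index i j).
Proof.
have hinj : injective (fun ij : 'I_l * 'I_m => mxvec_index ij.1 ij.2).
  by move=> [i j] [i' j'] /= /cast_ord_inj /enum_rank_inj.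
have hc : (#|{: 'I_(l * m)}| <= #|{: 'I_l * 'I_m}|)%N by rewrite card_prod !card_ord.
have hb := inj_card_bij hinj hc.
rewrite (reindex _ (onW_bij _ hb)) pair_big /=.
by apply: eq_bigr => [[i j]].
Qed.

Lemma wt_sum (R : nmodType) k (v : 'rV[R]_k) : wt v = (\sum_i (v 0%R i != 0%R))%N.
Proof. by rewrite /wt -sum1_card big_mkcond; apply: eq_bigr => i _; rewrite inE; case: (_ != _). Qed.

Section Tens.
Variables (F : finFieldType) (L : fieldExtType F) (n : nat) (pi : {linear L -> 'rV[F]_n}).

Lemma tens_entry l (c : 'rV[L]_l) i j : pi_tensor pi c 0 (mxvec_index i j) = pi (c 0 i) 0 j.
Proof. by rewrite /pi_tensor mxvecE mxE. Qed.

Lemma wt_tens l (c : 'rV[L]_l) : wt (pi_tensor pi c) = (\sum_i wt (pi (c 0%R i)))%N.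
Proof.
rewrite wt_sum (sum_mxvec (Monoid.ComLaw.clone _ _ addn _)) /=; apply: eq_bigr => i _.
by rewrite wt_sum; apply: eq_bigr => j _; rewrite tens_entry.
Qed.

Lemma dot_tens l (c c' : 'rV[L]_l) :
  dotv (pi_tensor pi c) (pi_tensor pi c') = \sum_i dotv (pi (c 0 i)) (pi (c' 0 i)).
Proof.
rewrite /dotv sum_mxvec; apply: eq_bigr => i _.
by apply: eq_bigr => j _; rewrite !tens_entry.
Qed.

Lemma tensB l (c1 c2 : 'rV[L]_l) : pi_tensor pi (c1 - c2) = pi_tensor pi c1 - pi_tensor pi c2.
Proof.
apply/rowP => k; case/mxvec_indexP: k => i j.
by rewrite mxE !tens_entry !mxE tens_entry linearD linearN /= !mxE.
Qed.

Lemma tens0 l : pi_tensor pi (0 : 'rV[L]_l) = 0.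
Proof. by rewrite -(subrr 0) tensB subrr. Qed.

Lemma tensZ l (k : F) (c : 'rV[L]_l) : pi_tensor pi (k%:A *: c) = k *: pi_tensor pi c.
Proof.
apply/rowP => t; case/mxvec_indexP: t => i j.
by rewrite mxE !tens_entry mxE mulr_algl linearZ /= mxE.
Qed.

Lemma tens_inj0 l (c : 'rV[L]_l) : (forall x, pi x = 0 -> x = 0) ->
  pi_tensor pi c = 0 -> c = 0.
Proof.
move=> hinj /eqP; rewrite mxvec_eq0 => /eqP H.
apply/rowP => i; rewrite mxE; apply: hinj; apply/rowP => j.
by have := congr1 (fun M : 'M[F]_(l, n) => M i j) H; rewrite !mxE.
Qed.
End Tens.

Lemma scalemx_entry (R : pzRingType) m k (c : R) (A : 'M[R]_(m, k)) i j :
  (c *: A) i j = c * A i j.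
Proof. by rewrite mxE. Qed.

Lemma ex_minP (P : nat -> Prop) k0 : P k0 -> exists k, P k /\ forall j, P j -> (k <= j)%N.
Proof.
elim/ltn_ind: k0 => k IH Pk.
case: (Classical_Prop.classic (exists j, P j /\ (j < k)%N)) => [[j [Pj ljk]]|nex].
  exact: IH j ljk Pj.
exists k; split => // j Pj; rewrite leqNgt; apply/negP => ljk; apply: nex; exists j; split => //.
Qed.

Lemma tensD (F : finFieldType) (L : fieldExtType F) (n : nat) (pi : {linear L -> 'rV[F]_n}) l
  (x y : 'rV[L]_l) : pi_tensor pi (x + y) = pi_tensor pi x + pi_tensor pi y.
Proof.
have H := tensB pi x (- y); rewrite opprK in H; rewrite H.
by have := tensB pi 0 y; rewrite sub0r tens0 sub0r => ->; rewrite opprK.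
Qed.

Unset Implicit Arguments.
Theorem theorem3p3
  (F : finFieldType) (p : nat) (Hp : prime p) (Hodd : odd p) (HcharF : p \in [pchar F])
  (L : fieldExtType F) (s n : nat) (HdimL : \dim {:L} = s)
  (Hs : (2 <= s)%N) (Hns : (s <= n)%N)
  (d : nat) (Hdmax : is_dmax_iso L n d) (Hd1 : (1 <= d)%N)
  (pi : {linear L -> 'rV[F]_n}) (Hpi : is_isometry pi)
  (Hpid : is_min_dist (image_code pi) d)
  (a b : L) (Hb : b != 0) (N : nat) (HN : (2 <= N)%N)
  (r m : nat) (Hr1 : (p ^ r %| N.+1)%N) (Hr2 : ~~ (p ^ r.+1 %| N.+1)%N)
  (Hm : N.+1 = (p ^ r * m.+1)%N)
  (E : fieldType) (iota : {rmorphism L -> E}) (theta mu : E)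
  (Htheta : (2 * m.+1)%N.-primitive_root theta) (Hmu : mu ^+ 2 = -1)
  (Hr0 : r = 0%N -> notin_S1 m theta mu (iota b) (iota (a / b)))
  (Hm0 : (1 <= r)%N -> m = 0%N -> notin_S2 mu (iota b) (iota (a / b)))
  (Hm1 : (1 <= r)%N -> (1 <= m)%N ->
           notin_S1 m theta mu (iota b) (iota (a / b)) /\
           notin_S2 mu (iota b) (iota (a / b)))
  (D : nat) (HD : is_min_dist (hatC N a b) D) :
  is_LCD (image_tensor_code N pi a b) /\
  is_linear_code_dim (image_tensor_code N pi a b) (s * N) /\
  exists Dstar : nat,
    is_min_dist (image_tensor_code N pi a b) Dstar /\ (d * D <= Dstar)%N.
Proof.
subst s.
have [e [e' [be Htr Hdot]]] := Hpi.
have pinj := pi_inj0 be Hdot.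
have pcL : p \in [pchar L] := rmorph_pchar (in_alg L) HcharF.
have pcE : p \in [pchar E] := rmorph_pchar iota pcL.
have ndv : ~~ (p %| m.+1)%N.
  apply: contra Hr2 => hd; rewrite Hm expnSr dvdn_pmul2l //.
  by rewrite expn_gt0 prime_gt0.
have ibnz : iota b != 0 by rewrite fmorph_eq0.
have S2 : (1 <= r)%N -> notin_S2 mu (iota b) (iota (a / b)).
  by move=> r1; case: (posnP m) => [m0|mpos]; [apply: Hm0 | case: (Hm1 r1 mpos)].
have S1 : forall i, (1 <= i <= m)%N -> notin_S1 m theta mu (iota b) (iota (a / b)).
  move=> i /andP [i1 im]; case: (posnP r) => [r0|rpos]; first exact: Hr0.
  by case: (Hm1 rpos (leq_trans i1 im)).
have c_plus : cheb ((iota a + mu) / iota b) N != 0.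
  apply/negP => /eqP H0.
  have [[r1 h2] | [i [hi hx]]] := cheb_roots pcE Hodd Hm ndv Htheta H0.
  - have HS := S2 r1; move: HS; rewrite /notin_S2 !inE.
    have -> : iota (a / b) = - mu / iota b + (iota a + mu) / iota b.
      by rewrite fmorph_div; field.
    by case: h2 => ->; rewrite eqxx ?orbT.
  - have [HS _] := S1 i hi i hi; move: HS.
    have -> : iota (a / b) = - mu / iota b + (iota a + mu) / iota b.
      by rewrite fmorph_div; field.
    by rewrite hx addrA eqxx.
have c_minus : cheb ((iota a - mu) / iota b) N != 0.
  apply/negP => /eqP H0.
  have [[r1 h2] | [i [hi hx]]] := cheb_roots pcE Hodd Hm ndv Htheta H0.
  - have HS := S2 r1; move: HS; rewrite /notin_S2 !inE.
    have -> : iota (a / b) = mu / iota b + (iota a - mu) / iota b.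
      by rewrite fmorph_div; field.
    by case: h2 => ->; rewrite eqxx ?orbT.
  - have [_ HS] := S1 i hi i hi; move: HS.
    have -> : iota (a / b) = mu / iota b + (iota a - mu) / iota b.
      by rewrite fmorph_div; field.
    by rewrite hx addrA eqxx.
set G := row_mx 1%:M (tridiag N a b).
have dimpos : (0 < \dim {:L})%N by apply: leq_trans Hs.
pose i0 := Ordinal dimpos.
split.
  move=> v [c [[u ->] ->]] Horth.
  suff -> : u = 0 by rewrite mul0mx tens0.
  apply: (hatC_orth (iota := iota) Hb Hmu c_plus c_minus) => u'.
  set z := dotv (u *m G) (u' *m G).
  have [//|nz] := eqVneq z 0.
  pose lam := tnth e i0 * tnth e' i0 / z.
  have H := Horth (pi_tensor pi ((lam *: u') *m G)) (ex_intro _ _ (conj (ex_intro _ (lam *: u') erefl) erefl)).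
  rewrite dot_tens in H.
  have : trF (lam * z) = 0.
    rewrite /z /dotv mulr_sumr trF_sum.
    transitivity (((\sum_i dotv (pi ((u *m G) 0 i)) (pi (((lam *: u') *m G) 0 i)))%:A : L)).
      rewrite scaler_suml; apply: eq_bigr => i _.
      by rewrite -(trB be Htr Hdot) -scalemxAl scalemx_entry mulrCA.
    by rewrite H scale0r.
  rewrite /lam mulfVK // => H'.
  have : ((i0 == i0)%:R : L) = 0 by rewrite -(Htr i0 i0); exact: H'.
  by rewrite eqxx => /eqP; rewrite oner_eq0.
have tinj : forall c1 c2 : 'rV[L]_(N + N), pi_tensor pi c1 = pi_tensor pi c2 -> c1 = c2.
  move=> c1 c2 H; apply/eqP; rewrite -subr_eq0; apply/eqP.
  by apply: (tens_inj0 pinj); rewrite tensB H subrr.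
pose gmap (w : 'rV[F]_(\dim {:L} * N)) : 'rV[L]_N :=
  \row_k \sum_i (vec_mx w) i k *: tnth e i.
pose Phi w := pi_tensor pi (gmap w *m G).
have PhiD : forall w1 w2, Phi (w1 + w2) = Phi w1 + Phi w2.
  move=> w1 w2; rewrite /Phi -tensD -mulmxDl; congr (pi_tensor pi (_ *m G)).
  apply/rowP => k; rewrite !mxE -big_split /=; apply: eq_bigr => i _.
  by rewrite !mxE scalerDl.
have Phi0 : Phi 0 = 0.
  by apply: (addrI (Phi 0)); rewrite -PhiD !addr0.
have PhiZ : forall (c : F) w, Phi (c *: w) = c *: Phi w.
  move=> c w; rewrite /Phi -tensZ scalemxAl; congr (pi_tensor pi (_ *m G)).
  apply/rowP => k; rewrite !mxE mulr_sumr; apply: eq_bigr => i _.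
  by rewrite !mxE mulr_algl scalerA.
pose M := \matrix_(t < \dim {:L} * N) Phi (delta_mx 0 t).
have mulM : forall w, w *m M = Phi w.
  move=> w; rewrite mulmx_sum_row {2}(row_sum_delta w).
  rewrite (big_morph Phi PhiD Phi0); apply: eq_bigr => t _.
  by rewrite rowK PhiZ.
have Phi_inj0 : forall w, Phi w = 0 -> w = 0.
  move=> w /(tens_inj0 pinj) /eqP; rewrite mul_mx_row row_mx_eq0 mulmx1 => /andP [/eqP g0 _].
  have W0 : vec_mx w = 0.
    apply/matrixP => i k; rewrite mxE.
    have := congr1 (fun v : 'rV[L]_N => v 0 k) g0; rewrite !mxE => Hk.
    move/freeP: (basis_free be) => /(_ (fun i => vec_mx w i k)) Hf.
    have := Hf _ i; rewrite mxE; apply.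
    by rewrite -[RHS]Hk; apply: eq_bigr => j _; rewrite (tnth_nth 0).
  by rewrite -(vec_mxK w) W0 linear0.
have rfM : row_free M.
  rewrite -kermx_eq0; apply/eqP/row_matrixP => i; rewrite row0.
  apply: Phi_inj0; rewrite -mulM; apply/sub_kermxP; exact: row_sub.
split.
  exists M; split => // v; split.
    move=> [c [[u ->] ->]]; apply/submxP.
    exists (mxvec (\matrix_(i, k) coord e i (u 0 k))).
    rewrite mulM /Phi; congr (pi_tensor pi (_ *m G)).
    apply/rowP => k; rewrite mxE mxvecK.
    by rewrite {1}(exp_e be (u 0 k)); apply: eq_bigr => i _; rewrite mxE.
  move/submxP => [w ->]; exists (gmap w *m G); split; first by exists (gmap w).
  by rewrite mulM.
set C := image_tensor_code N pi a b.
pose Q j := exists c1 c2, [/\ C c1, C c2, c1 != c2 & wt (c1 - c2) = j].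
have [[c1 [c2 [[u1 e1] [u2 e2] ne wt12]]] HD2] := HD.
have Q0 : Q (wt (pi_tensor pi c1 - pi_tensor pi c2)).
  exists (pi_tensor pi c1), (pi_tensor pi c2); split => //.
  - by exists c1; split => //; exists u1.
  - by exists c2; split => //; exists u2.
  - by apply: contra ne => /eqP /tinj ->.
have [k [Qk kmin]] := ex_minP Q0.
have wpi : forall x, x != 0 -> (d <= wt (pi x))%N.
  move=> x xnz; have [_ Hd2] := Hpid.
  have := Hd2 (pi x) (pi 0) (ex_intro _ x erefl) (ex_intro _ 0 erefl).
  rewrite linear0 subr0; apply; apply: contra xnz => /eqP /pinj ->.
  done.
exists k; split.
  split; first exact: Qk.
  by move=> x y Cx Cy nxy; apply: kmin; exists x, y.
have [x [y [[cx [[ux ->] ->]] [cy [[uy ->] ->]] nxy <-]]] := Qk.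
rewrite -tensB -mulmxBl.
set c := (ux - uy) *m G.
have cnz : c != 0.
  apply: contra nxy => /eqP c0; apply/eqP; apply: congr1; apply/eqP; rewrite -subr_eq0 -mulmxBl.
  by apply/eqP.
have HDc : (D <= wt c)%N.
  have := HD2 c 0 (ex_intro _ (ux - uy) erefl) (ex_intro _ 0 (esym (mul0mx _ _))) cnz.
  by rewrite subr0.
rewrite wt_tens.
apply: (@leq_trans (wt c * d)%N); first by rewrite mulnC leq_mul2r HDc orbT.
rewrite wt_sum big_distrl /=; apply: leq_sum => t _.
by case: eqP => [->|/eqP tnz] //=; rewrite mul1n wpi.
Qed.
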